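(* For every $n$ there exist $n$ weighted sites in the Euclidean plane whose weighted order-$3$ Voronoi diagram has $\Omega(n^2)$ non-empty regions.
   Context: Site $s_i\in\mathbb R^2$ has weight $w_i>0$ and $\omega_i=w_i^{1/2}$; the weighted distance from $p$ to $s_i$ is $\|s_i-p\|_2/\omega_i$ (multiplicatively weighted). For $A\subseteq S$ with $|A|=3$, the order-$3$ Voronoi region of $A$ is the set of points $p$ for which there exists $r$ with $\|s_i-p\|_2\le\omega_i r$ for all $s_i\in A$ and $\|s_i-p\|_2>\omega_i r$ for all $s_i\notin A$. *)

(* Defs.v *)
From HB Require Import structures.
From mathcomp Require Import all_boot all_order all_algebra.
From mathcomp Require Import boolp reals.
Set Implicit Arguments. Unset Strict Implicit. Unset Printing Implicit Defensive.
Import Order.TTheory GRing.Theory Num.Theory.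
Local Open Scope ring_scope.

Definition pt (R : realType) := (R * R)%type.

Definition edist (R : realType) (a b : pt R) : R :=
  Num.sqrt ((a.1 - b.1) ^+ 2 + (a.2 - b.2) ^+ 2).

Definition omega (R : realType) (wi : R) : R := Num.sqrt wi.

(* p belongs to the multiplicatively weighted order-k Voronoi region of A
   (A a set of site indices): there is r such that
   ||s_i - p|| <= omega_i r for i in A and ||s_i - p|| > omega_i r for i not in A. *)
Definition in_region (R : realType) (n : nat) (s : 'I_n -> pt R) (w : 'I_n -> R)
    (A : {set 'I_n}) (p : pt R) : Prop :=
  exists r : R,
    (forall i, i \in A -> edist (s i) p <= omega (w i) * r) /\
    (forall i, i \notin A -> edist (s i) p > omega (w i) * r).

Definition region_nonempty (R : realType) (n : nat) (s : 'I_n -> pt R) (w : 'I_n -> R)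
    (A : {set 'I_n}) : Prop :=
  exists p : pt R, in_region s w A p.

Definition num_order3_regions (R : realType) (n : nat) (s : 'I_n -> pt R)
    (w : 'I_n -> R) : nat :=
  #|[set A : {set 'I_n} | (#|A| == 3) && `[< region_nonempty s w A >]]|.

(* Main.v *)
Require Import Defs.
From HB Require Import structures.
From mathcomp Require Import all_boot all_order all_algebra.
From mathcomp Require Import boolp reals.
From mathcomp Require Import zify ring lra.
Set Implicit Arguments. Unset Strict Implicit.
Import Order.TTheory GRing.Theory Num.Theory.
Local Open Scope ring_scope.

Definition d2 (R : realType) (a b : pt R) : R := (a.1 - b.1) ^+ 2 + (a.2 - b.2) ^+ 2.

Lemma L1 (R : realType) (I J N M : R) : 0 <= I -> 0 <= J -> 2*J+1 <= N -> M = N^+2 + 1 ->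
  (2 * M * (I + 1) - 2 * M * (I+1))^+2 + (0 - (2*J+1))^+2 <= 1 * ((4 * M^+2 * (I+1)^+2 + 1) / M).
Proof.
move=> I0 J0 hJ hM.
have M0 : 0 < M by rewrite hM; nra.
rewrite mul1r ler_pdivlMr //.
have h1 : (2*J+1)^+2 <= N^+2 by nra.
have h2 : 1 <= (I+1)^+2 by nra.
nra.
Qed.

Lemma L2 (R : realType) (I J K N M : R) : 0 <= I -> 0 <= J -> I + 1 <= N -> M = N^+2 + 1 ->
  1 <= (K - I)^+2 ->
  1 * ((4 * M^+2 * (I+1)^+2 + 1) / M) < (2 * M * (K + 1) - 2 * M * (I+1))^+2 + (0 - (2*J+1))^+2.
Proof.
move=> I0 J0 hI hM hK.
have M0 : 1 <= M by rewrite hM; nra.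
rewrite mul1r ltr_pdivrMr; last by lra.
have h1 : (I+1)^+2 <= M - 1 by nra.
have e : (2 * M * (K + 1) - 2 * M * (I+1))^+2 = 4 * M^+2 * (K - I)^+2 by ring.
rewrite e.
have h3 : 4 * M^+2 <= 4 * M^+2 * (K-I)^+2 by nra.
nra.
Qed.

Lemma L3 (R : realType) (I L J M : R) : 0 < M -> (2 * L - (2 * J + 1))^+2 = 1 ->
  (0 - 2 * M * (I + 1))^+2 + (2 * L - (2 * J + 1))^+2 <= M * ((4 * M^+2 * (I+1)^+2 + 1) / M).
Proof.
move=> M0 h.
rewrite (mulrC M (_ / M)) divfK; last by lra.
rewrite h; rewrite le_eqVlt; apply/orP; left; apply/eqP; ring.
Qed.

Lemma L4 (R : realType) (I L J M : R) : 0 < M -> 9 <= (2 * L - (2 * J + 1))^+2 ->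
  M * ((4 * M^+2 * (I+1)^+2 + 1) / M) < (0 - 2 * M * (I + 1))^+2 + (2 * L - (2 * J + 1))^+2.
Proof.
move=> M0 h.
rewrite (mulrC M (_ / M)) divfK; last by lra.
have e : (0 - 2 * M * (I + 1))^+2 = 4 * M^+2 * (I+1)^+2 by ring.
rewrite e; lra.
Qed.

Lemma region_of_rho (R : realType) (n : nat) (s : 'I_n -> pt R) (w : 'I_n -> R)
   (A : {set 'I_n}) (p : pt R) (rho : R) :
  0 <= rho -> (forall k, 0 <= w k) ->
  (forall k, k \in A -> d2 (s k) p <= w k * rho) ->
  (forall k, k \notin A -> w k * rho < d2 (s k) p) ->
  in_region s w A p.
Proof.
move=> r0 w0 HA HnA; exists (Num.sqrt rho); split => k Hk.
- rewrite /edist /omega -sqrtrM // ler_sqrt; last exact: mulr_ge0.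
  exact: HA.
- have H := HnA k Hk.
  rewrite /edist /omega -sqrtrM // ltr_sqrt //.
  by apply: le_lt_trans H; apply: mulr_ge0.
Qed.

Definition mm n := (n %/ 2)%N.
Definition MM (R : realType) (n : nat) : R := (n%:R)^+2 + 1.
Definition site (R : realType) (n : nat) (k : 'I_n) : pt R :=
  if ((k : nat) < mm n)%N then (2 * MM R n * ((k : nat)%:R + 1), 0)
  else (0, 2 * ((k : nat) - mm n)%:R).
Definition wt (R : realType) (n : nat) (k : 'I_n) : R :=
  if ((k : nat) < mm n)%N then 1 else MM R n.
Arguments site : clear implicits.
Arguments wt : clear implicits.
Arguments MM : clear implicits.
Definition Tset (n i j : nat) : {set 'I_n} :=
  [set k : 'I_n | [|| val k == i, val k == mm n + j | val k == (mm n + j).+1]].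

Lemma MM_gt0 (R : realType) n : 0 < MM R n.
Proof. rewrite /MM; nra. Qed.

Lemma region_ij (R : realType) (n i j : nat) : (i < mm n)%N -> (j.+1 < mm n)%N ->
  region_nonempty (site R n) (wt R n) (Tset n i j).
Proof.
move=> Hi Hj.
have M0 := MM_gt0 R n.
have mn : (2 * mm n <= n)%N by rewrite /mm; lia.
exists (2 * MM R n * (i%:R + 1), 2 * j%:R + 1).
apply: (@region_of_rho _ _ _ _ _ _ ((4 * (MM R n)^+2 * (i%:R+1)^+2 + 1) / MM R n)).
- apply: divr_ge0; last exact: ltW.
  by apply: addr_ge0 => //; apply: mulr_ge0; [apply: mulr_ge0 => //; apply: sqr_ge0|apply: sqr_ge0].
- by move=> k; rewrite /wt; case: ifP => _ //; exact: ltW.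
- move=> k; rewrite inE /d2 /site /wt.
  case: (ltnP (k : nat) (mm n)) => Hk /= Hin.
  + have -> : (k : nat) = i by lia.
    apply: (@L1 _ _ _ (n%:R)) => //.
    * have : ((2 * j + 1)%:R <= n%:R :> R) by rewrite ler_nat; lia.
      by rewrite natrD natrM.
  + have [e|e] : ((k : nat) - mm n = j \/ (k : nat) - mm n = j.+1)%N by lia.
    * rewrite e; apply: L3 => //; ring.
    * rewrite e -addn1 natrD; apply: L3 => //; ring.
- move=> k; rewrite inE /d2 /site /wt.
  case: (ltnP (k : nat) (mm n)) => Hk /= Hin.
  + apply: (@L2 _ _ _ _ (n%:R)) => //.
    * have : ((i + 1)%:R <= n%:R :> R) by rewrite ler_nat; lia.
      by rewrite natrD.
    * have [h|h] : ((k : nat).+1 <= i \/ i.+1 <= k)%N by lia.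
      - have : (k.+1%:R <= i%:R :> R) by rewrite ler_nat.
        rewrite -addn1 natrD => h'; nra.
      - have : (i.+1%:R <= k%:R :> R) by rewrite ler_nat.
        rewrite -addn1 natrD => h'; nra.
  + apply: L4 => //.
    have [h|h] : (((k : nat) - mm n).+1 <= j \/ j.+2 <= (k : nat) - mm n)%N by lia.
    * have : (((k:nat) - mm n).+1%:R <= j%:R :> R) by rewrite ler_nat.
      rewrite -addn1 natrD => h'; nra.
    * have : (j.+2%:R <= ((k:nat) - mm n)%:R :> R) by rewrite ler_nat.
      rewrite -addn2 natrD => h'; nra.
Qed.

Lemma Tset_card (n i j : nat) : (i < mm n)%N -> (j.+1 < mm n)%N -> #|Tset n i j| = 3%N.
Proof.
move=> Hi Hj.
have mn : (2 * mm n <= n)%N by rewrite /mm; lia.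
have h1 : (i < n)%N by lia.
have h2 : (mm n + j < n)%N by lia.
have h3 : ((mm n + j).+1 < n)%N by lia.
have -> : Tset n i j = Ordinal h1 |: (Ordinal h2 |: [set Ordinal h3]).
  by apply/setP => k; rewrite /Tset !inE -!val_eqE /=.
rewrite !cardsU1 cards1 !inE -!val_eqE /=.
have -> : (i == mm n + j) = false by apply/negbTE; lia.
have -> : (i == (mm n + j).+1) = false by apply/negbTE; lia.
have -> : (mm n + j == (mm n + j).+1) = false by apply/negbTE; lia.
by [].
Qed.

Lemma Tset_inj (n i j i' j' : nat) : (i < mm n)%N -> (j.+1 < mm n)%N ->
  (i' < mm n)%N -> (j'.+1 < mm n)%N -> Tset n i j = Tset n i' j' -> i = i' /\ j = j'.
Proof.
move=> Hi Hj Hi' Hj' E.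
have mn : (2 * mm n <= n)%N by rewrite /mm; lia.
have h1 : (i < n)%N by lia.
have h2 : (mm n + j < n)%N by lia.
have h2' : (mm n + j' < n)%N by lia.
have e1 : (Ordinal h1 \in Tset n i j) = (Ordinal h1 \in Tset n i' j') by rewrite E.
have e2 : (Ordinal h2 \in Tset n i j) = (Ordinal h2 \in Tset n i' j') by rewrite E.
have e3 : (Ordinal h2' \in Tset n i j) = (Ordinal h2' \in Tset n i' j') by rewrite E.
move: e1 e2 e3; rewrite /Tset !inE /= !eqxx /= !orbT => /esym e1 /esym e2 e3.
lia.
Qed.

Theorem mainTheorem19 (R : realType) :
  exists c : R, 0 < c /\
  exists n0 : nat, forall n : nat, (n0 <= n)%N ->
    exists (s : 'I_n -> pt R) (w : 'I_n -> R),
      injective s /\ (forall i, 0 < w i) /\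
      c * (n%:R) ^+ 2 <= (num_order3_regions s w)%:R.
Proof.
exists (1/16); split; first lra.
exists 6%N => n Hn.
exists (site R n), (wt R n).
have M0 := MM_gt0 R n.
split; [|split].
- move=> k1 k2; rewrite /site.
  case: (ltnP (k1 : nat) (mm n)) => H1; case: (ltnP (k2 : nat) (mm n)) => H2 [] E *.
  + apply: val_inj => /=.
    have : (k1 : nat)%:R + 1 = (k2 : nat)%:R + 1 :> R.
      by apply: (mulfI (x := 2 * MM R n)) => //; rewrite mulf_neq0 // gt_eqF.
    by move/addIr/eqP; rewrite eqr_nat => /eqP.
  + exfalso; move: E; apply/eqP; rewrite mulf_neq0 //; first by rewrite mulf_neq0 // gt_eqF.
    by apply: lt0r_neq0; rewrite ltr_wpDl.
  + exfalso; move: E; apply/eqP; rewrite eq_sym mulf_neq0 //; first by rewrite mulf_neq0 // gt_eqF.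
    by apply: lt0r_neq0; rewrite ltr_wpDl.
  + apply: val_inj => /=.
    have : ((k1 : nat) - mm n)%:R = ((k2 : nat) - mm n)%:R :> R.
      lra.
    move/eqP; rewrite eqr_nat => /eqP; lia.
- by move=> k; rewrite /wt; case: ifP.
- set m := mm n.
  pose F := fun ij : 'I_m * 'I_m.-1 => Tset n ij.1 ij.2.
  have Hj : forall j : 'I_m.-1, ((j : nat).+1 < m)%N.
    by move=> j; have := ltn_ord j; lia.
  have Fi : injective F.
    move=> [i j] [i' j'] /= E.
    have [e1 e2] := Tset_inj (ltn_ord i) (Hj j) (ltn_ord i') (Hj j') E.
    by congr pair; apply: val_inj.
  have sub : F @: setT \subset [set A : {set 'I_n} | (#|A| == 3%N) && `[< region_nonempty (site R n) (wt R n) A >]].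
    apply/subsetP => A /imsetP [[i j] _ ->]; rewrite inE /F /=.
    rewrite Tset_card ?ltn_ord ?Hj //=.
    apply: asboolT; exact: region_ij (ltn_ord i) (Hj j).
  have := subset_leq_card sub.
  rewrite card_imset // cardsT card_prod !card_ord => Hle.
  rewrite /num_order3_regions.
  have Hnat : (n * n <= 16 * (m * m.-1))%N by rewrite /m /mm; nia.
  have : ((n * n)%:R <= (16 * (m * m.-1))%:R :> R) by rewrite ler_nat.
  have : ((m * m.-1)%:R <= #|[set A : {set 'I_n} | (#|A| == 3%N) && `[< region_nonempty (site R n) (wt R n) A >]]|%:R :> R) by rewrite ler_nat.
  rewrite !natrM expr2; lra.
Qed.
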